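(* Let $\mathcal{A}$ be a finite alphabet, $\mathbf{p}$ an irreducible pair on $\mathcal{A}$ and $\mathbf{q}$ a pair in the labeled Rauzy class of $\mathbf{p}$. Then $\mathcal{S}(\mathbf{q})=\mathcal{S}(\mathbf{p})$.
   Context: Let $n=\#\mathcal{A}$. A pair is $\mathbf{p}=(p_0,p_1)$ with $p_0,p_1:\mathcal{A}\to\{1,\dots,n\}$ bijections. Irreducible: $p_0^{-1}\{1,\dots,k\}\ne p_1^{-1}\{1,\dots,k\}$ for $1\le k<n$. Rauzy move of type $\varepsilon\in\{0,1\}$: $\varepsilon\mathbf{p}=(p'_0,p'_1)$, $p'_\varepsilon=p_\varepsilon$, and for $z=p_\varepsilon^{-1}(n)$, $p'_{1-\varepsilon}(b)=p_{1-\varepsilon}(b)$ if $p_{1-\varepsilon}(b)\le p_{1-\varepsilon}(z)$, $=p_{1-\varepsilon}(b)+1$ if $p_{1-\varepsilon}(z)<p_{1-\varepsilon}(b)<n$, $=p_{1-\varepsilon}(z)+1$ if $p_{1-\varepsilon}(b)=n$. The labeled Rauzy class of $\mathbf{p}$ is the set of pairs reachable from $\mathbf{p}$ by Rauzy moves. For irreducible $\mathbf{p}$, $\mathcal{S}(\mathbf{p}):\mathcal{A}\to\mathcal{A}$ is defined by $\mathcal{S}(\mathbf{p})(\alpha)=p_0^{-1}(1)$ if $p_1(\alpha)=1$; $=p_0^{-1}(p_0(p_1^{-1}(n))+1)$ if $p_1(\alpha)=p_1(p_0^{-1}(n))+1$; $=p_0^{-1}(p_0(p_1^{-1}(p_1(\alpha)-1))+1)$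 otherwise. *)

(* Defs.v *)
From mathcomp Require Import all_boot.
Set Implicit Arguments. Unset Strict Implicit. Unset Printing Implicit Defensive.

Section Rauzy.
Variable A : finType.

(* A pair p = (p_0, p_1); component [comp e p] is p_e, with e : bool
   (false = 0, true = 1). Values are taken in nat. *)
Definition pairT := ((A -> nat) * (A -> nat))%type.

Definition comp (e : bool) (p : pairT) : A -> nat := if e then p.2 else p.1.

Definition bij_onto (f : A -> nat) : Prop :=
  injective f /\ (forall a, 1 <= f a <= #|A|) /\
  (forall k, 1 <= k <= #|A| -> exists a, f a = k).

Definition is_pair (p : pairT) : Prop := bij_onto p.1 /\ bij_onto p.2.

Definition irreducible (p : pairT) : Prop :=
  is_pair p /\
  forall k, 1 <= k < #|A| ->
    [set a | p.1 a <= k] <> [set a | p.2 a <= k].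

(* inverse of f at k, with default d (only used where the preimage exists) *)
Definition inv (f : A -> nat) (d : A) (k : nat) : A :=
  odflt d [pick a | f a == k].

Definition rauzy_move (eps : bool) (p : pairT) : pairT :=
  let pe := comp eps p in
  let po := comp (~~ eps) p in
  let n := #|A| in
  let newo := fun b : A =>
    if [pick z | pe z == n] is Some z then
      (if po b <= po z then po b
       else if po b < n then (po b).+1
       else (po z).+1)
    else po b in
  if eps then (newo, p.2) else (p.1, newo).

Inductive in_rauzy_class (p : pairT) : pairT -> Prop :=
  | rc_refl : in_rauzy_class p p
  | rc_step q eps : in_rauzy_class p q -> in_rauzy_class p (rauzy_move eps q).

Definition S_map (p : pairT) (alpha : A) : A :=
  let p0 := p.1 in let p1 := p.2 in let n := #|A| in
  if p1 alpha == 1 then inv p0 alpha 1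
  else if p1 alpha == (p1 (inv p0 alpha n)).+1 then
    inv p0 alpha (p0 (inv p1 alpha n)).+1
  else inv p0 alpha (p0 (inv p1 alpha (p1 alpha).-1)).+1.

End Rauzy.

(* Main.v *)
Require Import Defs.
From mathcomp Require Import all_boot.
From mathcomp Require Import zify.
Set Implicit Arguments. Unset Strict Implicit. Unset Printing Implicit Defensive.

Section Proof.
Variable A : finType.

Definition Sspec (f0 f1 : A -> nat) (a b : A) : Prop :=
  (f1 a = 1 /\ f0 b = 1) \/
  (exists c, f1 c + 1 = f1 a /\ f0 c < #|A| /\ f0 b = f0 c + 1) \/
  (exists c w, f1 c + 1 = f1 a /\ f0 c = #|A| /\ f1 w = #|A| /\ f0 b = f0 w + 1).

Definition mv (f : A -> nat) m b :=
  if f b <= m then f b else if f b < #|A| then (f b).+1 else m.+1.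

Lemma inv_eq (f : A -> nat) (d : A) k a : injective f -> f a = k -> Defs.inv f d k = a.
Proof.
move=> i H; rewrite /Defs.inv; case: pickP => [x /eqP Hx|Hn] /=.
  by apply: i; rewrite Hx H.
by have := Hn a; rewrite H eqxx.
Qed.

Lemma spec_of_S (f0 f1 : A -> nat) : is_pair (f0, f1) ->
  forall a, Sspec f0 f1 a (S_map (f0, f1) a).
Proof.
move=> [[i0 [r0 s0]] [i1 [r1 s1]]] a; cbn [fst snd] in *; rewrite /S_map /=.
have ra := r1 a.
have [z Hz] : exists z, f0 z = #|A| by apply: s0; lia.
have [w Hw] : exists w, f1 w = #|A| by apply: s1; lia.
case: (eqVneq (f1 a) 1) => [H1|/eqP H1].
  have [b Hb] : exists b, f0 b = 1 by apply: s0; lia.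
  by left; rewrite (inv_eq a i0 Hb).
have [c Hc] : exists c, f1 c = (f1 a).-1 by apply: s1; lia.
rewrite (inv_eq a i0 Hz) (inv_eq a i1 Hw).
case: (eqVneq (f1 a) (f1 z).+1) => [H2|/eqP H2].
  have cz : c = z by apply: i1; lia.
  have wz : w <> z by move=> E; subst; lia.
  have f0w : f0 w < #|A|.
    have := r0 w; case: (ltngtP (f0 w) #|A|) => // E; first by lia.
    by move=> _; exfalso; apply: wz; apply: i0; rewrite E Hz.
  have [b Hb] : exists b, f0 b = (f0 w).+1 by apply: s0; lia.
  right; right; exists z, w; rewrite (inv_eq a i0 Hb); subst; lia.
rewrite (inv_eq a i1 Hc).
have f0c : f0 c < #|A|.
  have := r0 c; case: (ltngtP (f0 c) #|A|) => // E; first by lia.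
  move=> _; have cz : c = z by apply: i0; rewrite E Hz.
  by subst; lia.
have [b Hb] : exists b, f0 b = (f0 c).+1 by apply: s0; lia.
right; left; exists c; rewrite (inv_eq a i0 Hb); lia.
Qed.

Lemma spec_uniq (f0 f1 : A -> nat) a b b' : is_pair (f0, f1) ->
  Sspec f0 f1 a b -> Sspec f0 f1 a b' -> b = b'.
Proof.
move=> [[i0 [r0 s0]] [i1 [r1 s1]]]; cbn [fst snd] in *.
move=> [[Ha Hb]|[[c [Hc1 [Hc2 Hc3]]]|[c [w [Hc1 [Hc2 [Hw Hb]]]]]]];
move=> [[Ha' Hb']|[[c' [Hc1' [Hc2' Hc3']]]|[c' [w' [Hc1' [Hc2' [Hw' Hb']]]]]]];
apply: i0; try (have := r1 c); try (have := r1 c'); try lia;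
  try (have E : c = c' by apply: i1; lia); try (subst; lia).
have E2 : w = w' by apply: i1; lia.
subst; lia.
Qed.

Lemma mv_bij f m : bij_onto f -> bij_onto (mv f m).
Proof.
move=> [i [r s]]; split; last split.
- move=> b b' E; apply: i; move: E; rewrite /mv.
  have := r b; have := r b'.
  case: ifP; case: ifP; try case: ifP; try case: ifP; lia.
- move=> b; have := r b; rewrite /mv.
  case: ifP; first lia. case: ifP; first lia.
  move=> H1 H2; move: (r b); lia.
- move=> k Hk.
  case: (leqP k m) => Hkm.
    have [b Hb] := s k Hk; exists b; rewrite /mv Hb Hkm //.
  case: (eqVneq k m.+1) => Hk1.
    have [b Hb] : exists b, f b = #|A| by apply: s; lia.
    exists b; rewrite /mv Hb; subst.
    have -> : (#|A| <= m) = false by lia.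
    by rewrite ltnn.
  have [b Hb] : exists b, f b = k.-1 by apply: s; lia.
  exists b; rewrite /mv Hb.
  have -> : (k.-1 <= m) = false by lia.
  have -> : (k.-1 < #|A|) = true by lia.
  lia.
Qed.

Lemma transfer0 (f0 f1 : A -> nat) z a b : is_pair (f0, f1) -> f0 z = #|A| ->
  Sspec f0 f1 a b -> Sspec f0 (mv f1 (f1 z)) a b.
Proof.
move=> [[i0 [r0 s0]] [i1 [r1 s1]]] Hz; cbn [fst snd] in *.
have := r1 a; have := r1 z; rewrite /Sspec /mv.
move=> rz ra.
move=> [[Ha Hb]|[[c [Hc1 [Hc2 Hc3]]]|[c [w [Hc1 [Hc2 [Hw Hb]]]]]]].
- left; split => //; rewrite Ha; by repeat (case: ifP => ?); lia.
- have := r1 c => rc.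
  have cz : c <> z by move=> E; subst; lia.
  have f1c : f1 c <> f1 z by move=> E; apply: cz; apply: i1.
  case: (leqP (f1 a) (f1 z)) => H.
    right; left; exists c; by repeat (case: ifP => ?); lia.
  case: (ltnP (f1 a) #|A|) => H'.
    right; left; exists c; 
    by repeat (case: ifP => ?); lia.
  right; right; exists z, c.
  
  by repeat (case: ifP => ?); lia.
- have cz : c = z by apply: i0; rewrite Hc2 Hz.
  subst c.
  have := r1 w => rw.
  case: (ltnP (f1 z).+1 #|A|) => H.
    have wz : f0 w <> #|A|.
      move=> E; have E' : w = z by apply: i0; rewrite E Hz.
      subst; lia.
    have := r0 w => r0w.
    right; left; exists w.
    
    by repeat (case: ifP => ?); lia.
  right; right; exists z, w.
  
  by repeat (case: ifP => ?); lia.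
Qed.

Lemma transfer1 (f0 f1 : A -> nat) w a b : is_pair (f0, f1) -> f1 w = #|A| ->
  Sspec f0 f1 a b -> Sspec (mv f0 (f0 w)) f1 a b.
Proof.
move=> [[i0 [r0 s0]] [i1 [r1 s1]]] Hw; cbn [fst snd] in *.
have := r1 a; have := r0 b; have := r0 w; rewrite /Sspec /mv.
move=> rw rb ra.
move=> [[Ha Hb]|[[c [Hc1 [Hc2 Hc3]]]|[c [w' [Hc1 [Hc2 [Hw' Hb]]]]]]].
- left; split => //; rewrite Hb; by repeat (case: ifP => ?); lia.
- have := r1 c => rc; have := r0 c => r0c.
  have cw : c <> w by move=> E; subst; lia.
  have f0c : f0 c <> f0 w by move=> E; apply: cw; apply: i0.
  case: (ltnP (f0 c) (f0 w)) => H.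
    right; left; exists c.
    by repeat (case: ifP => ?); lia.
  case: (ltnP (f0 c).+1 #|A|) => H'.
    right; left; exists c.
    
    by repeat (case: ifP => ?); lia.
  right; right; exists c, w.
  
  by repeat (case: ifP => ?); lia.
- have ww : w' = w by apply: i1; rewrite Hw' Hw.
  subst w'.
  have := r1 c => rc; have := r0 c => r0c.
  have cw : c <> w by move=> E; subst; lia.
  have f0c : f0 w <> #|A| by move=> E; apply: cw; apply: i0; rewrite E Hc2.
  case: (ltnP (f0 w).+1 #|A|) => H.
    right; left; exists c.
    
    by repeat (case: ifP => ?); lia.
  right; right; exists c, w.
  
  by repeat (case: ifP => ?); lia.
Qed.

Lemma move_ok eps (p : pairT A) : is_pair p ->
  is_pair (rauzy_move eps p) /\ forall a, S_map (rauzy_move eps p) a = S_map p a.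
Proof.
case: p => f0 f1 hp; have hp' := hp; move: hp' => [b0 b1].
rewrite /rauzy_move; case: eps => /=.
- case: pickP => [w /eqP Hw|Hn] /=; last by split.
  have hq : is_pair (mv f0 (f0 w), f1) by split => //; apply: mv_bij.
  split => // a.
  apply: (spec_uniq hq); first exact: spec_of_S.
  by apply: transfer1 => //; apply: spec_of_S.
- case: pickP => [z /eqP Hz|Hn] /=; last by split.
  have hq : is_pair (f0, mv f1 (f1 z)) by split => //; apply: mv_bij.
  split => // a.
  apply: (spec_uniq hq); first exact: spec_of_S.
  by apply: transfer0 => //; apply: spec_of_S.
Qed.

End Proof.

Theorem proposition2p10 (A : finType) (p q : pairT A) :
  irreducible p -> in_rauzy_class p q ->
  forall alpha : A, S_map q alpha = S_map p alpha.
Proof.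
move=> [hp _] hq.
suff : is_pair q /\ forall a, S_map q a = S_map p a by case.
elim: hq => [|q' eps _ [hq IH]]; first by split.
have [h1 h2] := move_ok eps hq.
by split => // a; rewrite h2 IH.
Qed.
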